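(* Let $\mathfrak{A}$ be a $(\circ,\wedge,\mathsf{A})$-algebra that is representable by partial functions. If $\mathfrak{A}$ is atomic, then it is atomistic: every $a\in\mathfrak{A}$ is the join (in $\mathfrak{A}$) of the set of atoms $x$ with $x\le a$.
   Context: A $(\circ,\wedge,\mathsf{A})$-algebra is a set with two binary operations $\circ,\wedge$ and one unary operation $\mathsf{A}$. An algebra of partial functions of this signature is a set of partial functions, with base $X$ the union of all their domains and ranges, closed under: composition $f\circ g=\{(x,z)\mid \exists y\,(x,y)\in f,(y,z)\in g\}$; intersection; antidomain $\mathsf{A}(f)=\{(x,x)\mid x\in X, x\notin\mathrm{dom}(f)\}$. A representation by partial functions is an isomorphism onto such an algebra. The order is $a\le b\iff a\wedge b=a$, with least element $0=\mathsf{A}(a)\circ a$. An atom is a minimal nonzero element; $\mathfrak{A}$ is atomic if every nonzero element is above an atom. *)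

(* Defs.v *)
Set Implicit Arguments.

Record CWAAlgebra := {
  carrier :> Type;
  comp : carrier -> carrier -> carrier;
  meet : carrier -> carrier -> carrier;
  antidom : carrier -> carrier
}.

Section Defs.
Variable T : CWAAlgebra.

Definition le (a b : T) : Prop := meet T a b = a.

(* least element 0 = A(a) o a *)
Definition zero_of (a : T) : T := comp T (antidom T a) a.

Definition is_atom (x : T) : Prop :=
  x <> zero_of x /\ forall y : T, le y x -> y = zero_of x \/ y = x.

Definition atomic : Prop :=
  forall a : T, a <> zero_of a -> exists x : T, is_atom x /\ le x a.

Definition is_join (S : T -> Prop) (a : T) : Prop :=
  (forall x, S x -> le x a) /\
  (forall b, (forall x, S x -> le x b) -> le a b).

Definition atomistic : Prop :=
  forall a : T, is_join (fun x => is_atom x /\ le x a) a.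
End Defs.

Definition rel (X : Type) := X -> X -> Prop.

Definition functional (X : Type) (f : rel X) : Prop :=
  forall x y z, f x y -> f x z -> y = z.

Definition rcomp (X : Type) (f g : rel X) : rel X :=
  fun x z => exists y, f x y /\ g y z.

Definition rmeet (X : Type) (f g : rel X) : rel X :=
  fun x y => f x y /\ g x y.

Definition rantidom (X : Type) (f : rel X) : rel X :=
  fun x y => x = y /\ ~ (exists z, f x z).

Definition rel_eq (X : Type) (f g : rel X) : Prop :=
  forall x y, f x y <-> g x y.

Definition representation (T : CWAAlgebra) (X : Type) (h : T -> rel X) : Prop :=
  (forall a, functional (h a)) /\
  (forall a b, rel_eq (h a) (h b) -> a = b) /\
  (forall a b, rel_eq (h (comp T a b)) (rcomp (h a) (h b))) /\
  (forall a b, rel_eq (h (meet T a b)) (rmeet (h a) (h b))) /\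
  (forall a, rel_eq (h (antidom T a)) (rantidom (h a))) /\
  (forall x : X, exists a y, h a x y \/ h a y x).

Definition representable_pf (T : CWAAlgebra) : Prop :=
  exists (X : Type) (h : T -> rel X), @representation T X h.

(* Main.v *)
Require Import Defs.
From Stdlib Require Import Classical.

Theorem mainTheorem14 (T : CWAAlgebra) :
  representable_pf T -> atomic T -> atomistic T.
Proof.
  intros [X [h [Hf [Hinj [Hc [Hm [Ha Hbase]]]]]]] Hat.
  assert (Hle : forall a b, @le T a b <-> (forall x y, h a x y -> h b x y)).
  { intros a b; split.
    - intros E x y H. unfold le in E. rewrite <- E in H.
      apply Hm in H. destruct H; assumption.
    - intros H. unfold le. apply Hinj. intros x y; split.
      + intros H1. apply Hm in H1. destruct H1; assumption.
      + intros H1. apply Hm. split; auto. }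
  assert (Hz : forall a x y, ~ h (zero_of T a) x y).
  { intros a x y H. unfold zero_of in H. apply Hc in H.
    destruct H as [w [H1 H2]]. apply Ha in H1. destruct H1 as [-> H1].
    apply H1. eauto. }
  assert (Hnz : forall c, c <> zero_of T c -> exists x y, h c x y).
  { intros c H. apply NNPP. intros N. apply H. apply Hinj.
    intros x y; split; intros H'.
    - exfalso. apply N. eauto.
    - exfalso. eapply Hz; eauto. }
  intros a. split.
  - intros x [_ H]. exact H.
  - intros b Hb. apply Hle. intros x y Hxy.
    destruct (classic (h b x y)) as [Hy|Hn]; [exact Hy|exfalso].
    set (c := comp T (antidom T (meet T a b)) a).
    assert (Hcx : h c x y).
    { apply Hc. exists x. split; [|exact Hxy]. apply Ha. split; [reflexivity|].
      intros [z Hz']. apply Hm in Hz'. destruct Hz' as [H1 H2].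
      assert (y = z) by (eapply Hf; eauto). subst. auto. }
    assert (Hcnz : c <> zero_of T c).
    { intros E. rewrite E in Hcx. eapply Hz; eauto. }
    destruct (Hat c Hcnz) as [t [Hta Htc]].
    pose proof (proj1 (Hle _ _) Htc) as Htc'.
    assert (Htb : @le T t b).
    { apply Hb. split; [exact Hta|]. apply Hle. intros u v Huv.
      apply Htc' in Huv. apply Hc in Huv. destruct Huv as [w [H1 H2]]. apply Ha in H1. destruct H1 as [E _]. subst w. exact H2. }
    destruct (Hnz t (proj1 Hta)) as [u [v Huv]].
    pose proof (Htc' _ _ Huv) as Hcu. pose proof (proj1 (Hle _ _) Htb _ _ Huv) as Hbu.
    apply Hc in Hcu. destruct Hcu as [w [H1 H2]]. apply Ha in H1.
    destruct H1 as [E H1]. subst w. apply H1. exists v. apply Hm. split; [exact H2 | exact Hbu].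
Qed.
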